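(* For every $x\ge1$, $$x^{-1/x}\,\Gamma\!\Big(\frac1x\Big)\ \le\ \Gamma\!\Big(x,\frac1x\Big)\ \le\ x^{x}\,\Gamma(x),$$ and for every $0<x\le1$ both inequalities are reversed: $$x^{-1/x}\,\Gamma\!\Big(\frac1x\Big)\ \ge\ \Gamma\!\Big(x,\frac1x\Big)\ \ge\ x^{x}\,\Gamma(x).$$
   Context: For $x>0,y>0$ the Bigamma function is the (convergent) improper integral $\Gamma(x,y):=\int_0^1(-\ln t)^{x-1}\big(-\ln(1-t)\big)^{y-1}\,dt$. $\Gamma(x)$ (one argument) denotes Euler's gamma function. *)

(* Defs.v *)
(* integrals are Lebesgue integrals of nonnegative
   functions, valued in the extended reals \bar R; for nonnegative integrands
   these coincide with the (convergent) improper Riemann integrals. *)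
From HB Require Import structures.
From mathcomp Require Import all_boot all_order all_algebra.
From mathcomp Require Import all_classical all_reals all_analysis.
Set Implicit Arguments. Unset Strict Implicit. Unset Printing Implicit Defensive.
Import Order.TTheory GRing.Theory Num.Theory.
Local Open Scope classical_set_scope.
Local Open Scope ring_scope.

Definition EulerGamma (R : realType) (x : R) : \bar R :=
  (\int[@lebesgue_measure R]_(t in `]0%R, +oo[) (t `^ (x - 1) * expR (- t))%:E)%E.

Definition Bigamma (R : realType) (x y : R) : \bar R :=
  (\int[@lebesgue_measure R]_(t in `]0%R, 1%R[)
      ((- ln t) `^ (x - 1) * (- ln (1 - t)) `^ (y - 1))%:E)%E.

(* Main.v *)
Require Import Defs.
From HB Require Import structures.
From mathcomp Require Import all_boot all_order all_algebra.
From mathcomp Require Import all_classical all_reals all_analysis.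
Import Order.TTheory GRing.Theory Num.Theory.
Local Open Scope ring_scope.
From mathcomp Require Import measurable_realfun.
From mathcomp Require Import lra ring.
Import numFieldNormedType.Exports.
Local Open Scope classical_set_scope.

Section Refl.
Variable R : realType.
Local Notation mu := (@lebesgue_measure R).

Lemma onem_push (A : set R) : measurable A ->
  pushforward mu ((fun t : R => 1 - t) : _ -> measurableTypeR R) A = mu A.
Proof.
have mphi : measurable_fun [set: R] (fun t : R => 1 - t).
  by apply: measurable_funB => //; exact: measurable_cst.
move=> mA; apply/esym/lebesgue_measure_unique => //=; last first.

move=> _ [[a b]] _ <-.
rewrite /pushforward.
have -> : (fun t : R => 1 - t) @^-1` `]a, b] = `[1 - b, 1 - a[%classic.
  apply/seteqP; split => t /=; rewrite !in_itv/= => /andP[h1 h2];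
    apply/andP; split; lra.
rewrite !lebesgue_measure_itv/= !lte_fin.
have -> : (1 - b < 1 - a) = (a < b) by apply/idP/idP; lra.
case: ifP => // _. congr EFin. lra.
Qed.

Local Open Scope ereal_scope.
Lemma refl01 (f : R -> \bar R) : measurable_fun [set: R] f ->
  (forall t, 0 <= f t) ->
  \int[mu]_(t in `]0%R, 1%R[) f t = \int[mu]_(t in `]0%R, 1%R[) f (1 - t)%R.
Proof.
move=> mf f0.
have mphi : measurable_fun [set: R] (fun t : R => 1 - t)%R.
  by apply: measurable_funB => //; exact: measurable_cst.
have E : (fun t : R => 1 - t)%R @^-1` `]0%R, 1%R[ = `]0%R, 1%R[%classic.
  apply/seteqP; split => t /=; rewrite !in_itv/= => /andP[h1 h2];
    apply/andP; split; lra.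
rewrite -[in RHS]E.
rewrite -(@ge0_integral_pushforward _ _ (measurableTypeR R) (measurableTypeR R) R
   ((fun t : R => 1 - t)%R : _ -> measurableTypeR R) mphi mu `]0%R, 1%R[ f) //.
- apply: eq_measure_integral => A mA _ /=.
  by rewrite onem_push.
- exact: measurable_funTS.

Qed.
End Refl.

Section S.
Variable R : realType.
Local Notation mu := (@lebesgue_measure R).

Lemma powRE' (a r : R) : 0 < a -> a `^ r = expR (r * ln a).
Proof. by move=> a0; rewrite /powR gt_eqF. Qed.

Lemma powR_le_pos (a b r : R) : 0 < a -> a <= b -> 0 <= r -> a `^ r <= b `^ r.
Proof.
move=> a0 ab r0; have b0 : 0 < b by exact: lt_le_trans ab.
rewrite !powRE' // ler_expR; apply: ler_wpM2l => //.
by rewrite ler_ln ?posrE.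
Qed.

Lemma powR_le_neg (a b r : R) : 0 < a -> a <= b -> r <= 0 -> b `^ r <= a `^ r.
Proof.
move=> a0 ab r0; have b0 : 0 < b by exact: lt_le_trans ab.
rewrite !powRE' // ler_expR; apply: ler_wnM2l => //.
by rewrite ler_ln ?posrE.
Qed.

Lemma cont_pow (a r : R) : 0 < a -> {for a, continuous (fun x : R => x `^ r)}.
Proof.
move=> a0; apply/differentiable_continuous/derivable1_diffP.
by apply: derivable_powR; rewrite in_itv/= a0.
Qed.

Lemma cont_G (p q t : R) : 0 < t < 1 ->
  {for t, continuous (fun t : R => t `^ (q - 1) * (- ln t) `^ (p - 1))}.
Proof.
move=> /andP[t0 t1].
apply: continuousM; first exact: cont_pow.
apply: (@continuous_comp _ _ _ (fun t : R => - ln t) (fun x : R => x `^ (p - 1))).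
  by apply: continuousN; exact: continuous_ln.
by apply: cont_pow; rewrite oppr_gt0 ln_lt0 // t0 t1.
Qed.

Lemma derive_F (c : R) :
  (fun v : R => expR (- c * v))^`()%classic = (fun v => - c * expR (- c * v)).
Proof.
apply/funext => z.
rewrite (_ : (fun v : R => expR (- c * v)) = expR \o (fun v => - c * v)) //.
rewrite derive1_comp//.
rewrite derive1Ml// derive1_id mulr1.
rewrite derive1E.
have /funeqP -> := @derive_expR R.
by rewrite mulrC.
Qed.

Lemma pt_id (p q v : R) : 0 < q -> 0 < v ->
  (expR (- q^-1 * v) `^ (q - 1) * (- ln (expR (- q^-1 * v))) `^ (p - 1)) *
    (- (- q^-1 * expR (- q^-1 * v))) =
  q `^ (- p) * (v `^ (p - 1) * expR (- v)).
Proof.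
move=> q0 v0.
have qi0 : 0 < q^-1 by rewrite invr_gt0.
have e1 : - ln (expR (- q^-1 * v)) = q^-1 * v by rewrite expRK mulNr opprK.
have e2 : - (- q^-1 * expR (- q^-1 * v)) = expR (- ln q) * expR (- q^-1 * v).
  by rewrite mulNr opprK -lnV ?posrE // lnK ?posrE.
rewrite e1 e2.
have cv0 : 0 < q^-1 * v by exact: mulr_gt0.
rewrite (powRE' _ _ (expR_gt0 _)) expRK (powRE' _ _ cv0) lnM ?posrE //.
rewrite lnV ?posrE // (powRE' _ _ q0) (powRE' _ _ v0).
rewrite -!expRD; congr expR.
field.
by rewrite gt_eqF.
Qed.

Local Open Scope ereal_scope.

Lemma sub_bounded (p q a b : R) : (0 < q)%R -> (0 < a)%R -> (a <= b)%R ->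
  \int[mu]_(x in `[expR (- q^-1 * b), expR (- q^-1 * a)])
     ((x `^ (q - 1) * (- ln x) `^ (p - 1))%:E) =
  \int[mu]_(x in `[a, b]) ((q `^ (- p) * (x `^ (p - 1) * expR (- x)))%:E).
Proof.
move=> q0 a0 ab.
set c := (q^-1)%R.
have c0 : (0 < c)%R by rewrite invr_gt0.
set F := fun v : R => expR (- c * v).
set G := fun t : R => (t `^ (q - 1) * (- ln t) `^ (p - 1))%R.
have Fd := derive_F c.
have cF' : continuous (fun v : R => - c * expR (- c * v))%R.
  move=> x; apply: (@continuousM _ R^o (fun=> - c)%R (fun v : R => expR (- c * v))%R); first exact: cst_continuous.
  apply: (@continuous_comp _ _ _ (fun v : R => - c * v)%R expR).
    by apply: continuousM; [exact: cst_continuous | exact: cvg_id].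
  exact: continuous_expR.
have cF : continuous F.
  move=> x; apply: (@continuous_comp _ _ _ (fun v : R => - c * v)%R expR).
    by apply: continuousM; [exact: cst_continuous | exact: cvg_id].
  exact: continuous_expR.
rewrite (@integration_by_substitution_decreasing R F G a b) //.
- apply: eq_integral => v; rewrite inE/= in_itv/= => /andP[av vb].
  have v0 : (0 < v)%R by exact: lt_le_trans av.
  rewrite /comp /G /F Fd !fctE; congr EFin; exact: pt_id.
- move=> x y _ _ xy; rewrite /F ltr_expR !mulNr ltrN2 ltr_pM2l //.
- by rewrite Fd => x _; exact: cF'.
- rewrite Fd; apply: (cvgP (- c * expR (- c * a))%R); apply: cvg_at_right_filter; exact: cF'.
- rewrite Fd; apply: (cvgP (- c * expR (- c * b))%R); apply: cvg_at_left_filter; exact: cF'.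
- split.
  + move=> x _; rewrite /F; apply/derivable1_diffP; apply: (@differentiable_comp _ _ _ _ (fun v : R => - c * v)%R expR).
      by apply/derivable1_diffP.
    by apply/derivable1_diffP; exact: derivable_expR.
  + by apply: cvg_at_right_filter; exact: cF.
  + by apply: cvg_at_left_filter; exact: cF.
- apply: continuous_in_subspaceT => t; rewrite inE/= in_itv/= => /andP[h1 h2].
  apply: cont_G; apply/andP; split.
    exact: lt_le_trans (expR_gt0 _) h1.
  apply: le_lt_trans h2 _; rewrite expR_lt1 mulNr oppr_lt0; exact: mulr_gt0.
Qed.


Lemma meas_g1 (p q : R) : measurable_fun [set: R]
  (fun t : R => ((t `^ (q - 1) * (- ln t) `^ (p - 1))%:E)).
Proof.
apply/measurable_EFinP; apply: measurable_funM; first exact: measurable_powR.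
apply: (measurableT_comp (measurable_powR _)).
by apply: measurable_funN; exact: measurable_ln.
Qed.

Lemma meas_g2 (p k : R) : measurable_fun [set: R]
  (fun v : R => ((k * (v `^ (p - 1) * expR (- v)))%:E)).
Proof.
apply/measurable_EFinP; apply: measurable_funM; first exact: measurable_cst.
apply: measurable_funM; first exact: measurable_powR.
apply: (@measurableT_comp _ _ _ _ _ _ expR _ (fun v : R => - v)%R).
  exact: measurable_expR.
exact: measurable_funN.
Qed.

Local Close Scope ereal_scope.
Lemma union_A : \bigcup_n `[((n.+1%:R)^-1 : R), n.+1%:R]%classic = `]0%R, +oo[%classic.
Proof.
apply/seteqP; split => x /=.
  move=> [n _]; rewrite /= !in_itv/= andbT => /andP[h1 h2].
  by apply: lt_le_trans h1; rewrite invr_gt0.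
rewrite in_itv/= andbT => x0.
have xi0 : (0 < x^-1)%R by rewrite invr_gt0.
have hN := truncnS_gt (x + x^-1).
exists (Num.truncn (x + x^-1)) => //=.
rewrite in_itv/=; apply/andP; split; last by lra.
rewrite -[leRHS]invrK lef_pV2 ?posrE //.

lra.
Qed.

Lemma Fle (c x y : R) : 0 < c -> y <= x -> expR (- c * x) <= expR (- c * y).
Proof. by move=> c0 yx; rewrite ler_expR !mulNr lerN2 ler_pM2l. Qed.

Lemma union_B (c : R) : 0 < c ->
  \bigcup_n `[expR (- c * n.+1%:R), expR (- c * (n.+1%:R)^-1)]%classic = `]0%R, 1%R[%classic.
Proof.
move=> c0; apply/seteqP; split => t /=.
  move=> [n _]; rewrite /= !in_itv/= => /andP[h1 h2]; apply/andP; split.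
    exact: lt_le_trans (expR_gt0 _) h1.
  apply: le_lt_trans h2 _; rewrite expR_lt1 mulNr oppr_lt0; by apply: mulr_gt0; rewrite ?invr_gt0.
rewrite in_itv/= => /andP[t0 t1].
set v := - ln t * c^-1.
have v0 : 0 < v by apply: mulr_gt0; rewrite ?invr_gt0 // oppr_gt0 ln_lt0 // t0 t1.
have : `]0%R, +oo[%classic v by rewrite /= in_itv/= v0.
rewrite -union_A => -[n _]; rewrite /= in_itv/= => /andP[h1 h2].
exists n => //=.
have e : - c * v = ln t by rewrite /v; field; rewrite gt_eqF.
rewrite in_itv/= -(lnK (t0 : t \in Num.pos)) -e.
by apply/andP; split; apply: Fle.
Qed.

Local Open Scope ereal_scope.

Lemma KEY (p q : R) : (0 < q)%R ->
  \int[mu]_(t in `]0%R, 1%R[) ((t `^ (q - 1) * (- ln t) `^ (p - 1))%:E) =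
  (q `^ (- p))%:E * \int[mu]_(v in `]0%R, +oo[) ((v `^ (p - 1) * expR (- v))%:E).
Proof.
move=> q0.
have c0 : (0 < q^-1)%R by rewrite invr_gt0.
pose an (n : nat) : R := (n.+1%:R)^-1%R.
pose bn (n : nat) : R := n.+1%:R.
pose A n := `[an n, bn n]%classic.
pose B n := `[expR (- q^-1 * bn n), expR (- q^-1 * an n)]%classic.
have an_le : forall n m, (n <= m)%N -> (an m <= an n)%R.
  move=> n m nm; rewrite /an lef_pV2 ?posrE ?ltr0n // ler_nat ltnS //.
have bn_le : forall n m, (n <= m)%N -> (bn n <= bn m)%R.
  by move=> n m nm; rewrite /bn ler_nat ltnS.
have ndA : {homo A : n m / (n <= m)%N >-> (n <= m)%O}.
  move=> n m nm; rewrite subsetEset => x; rewrite /A /B /= !in_itv/= => /andP[h1 h2].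
  apply/andP; split; [exact: le_trans (an_le _ _ nm) h1 | exact: le_trans h2 (bn_le _ _ nm)].
have ndB : {homo B : n m / (n <= m)%N >-> (n <= m)%O}.
  move=> n m nm; rewrite subsetEset => x; rewrite /A /B /= !in_itv/= => /andP[h1 h2].
  apply/andP; split.
    by apply: le_trans h1; apply: Fle => //; exact: bn_le.
  by apply: le_trans h2 _; apply: Fle => //; exact: an_le.
have k0 : (0 <= q `^ (- p))%R by exact: powR_ge0.
have h1 := @ge0_nondecreasing_set_cvg_integral _ (measurableTypeR R) _ B
  (fun t : R => ((t `^ (q - 1) * (- ln t) `^ (p - 1))%:E)) mu ndB
  (fun i => measurable_itv _) (fun i => measurable_funTS (meas_g1 p q))
  (fun i x _ => ltac:(by rewrite lee_fin mulr_ge0 // powR_ge0)).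
have h2 := @ge0_nondecreasing_set_cvg_integral _ (measurableTypeR R) _ A
  (fun v : R => ((q `^ (- p) * (v `^ (p - 1) * expR (- v)))%:E)) mu ndA
  (fun i => measurable_itv _) (fun i => measurable_funTS (meas_g2 p _))
  (fun i x _ => ltac:(by rewrite lee_fin mulr_ge0 // mulr_ge0 // ?powR_ge0 // expR_ge0)).
rewrite union_A in h2.
rewrite union_B // in h1.
have eqs : (fun i => \int[mu]_(x in B i) ((x `^ (q - 1) * (- ln x) `^ (p - 1))%:E)) =
  (fun i => \int[mu]_(x in A i) ((q `^ (- p) * (x `^ (p - 1) * expR (- x)))%:E)).
  apply/funext => n; apply: sub_bounded => //.
    by rewrite /an invr_gt0 ltr0n.
  by rewrite /an /bn; apply: (@le_trans _ _ 1%R); [rewrite invf_le1 ?ler1n ?ltr0n | rewrite ler1n].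
rewrite eqs in h1.
rewrite (cvg_unique (@ereal_hausdorff R) h1 h2).
under eq_integral do rewrite EFinM.
rewrite ge0_integralZl_EFin //.
- by move=> x _; rewrite lee_fin mulr_ge0 ?powR_ge0 ?expR_ge0.
- apply: measurable_funTS; apply/measurable_EFinP; apply: measurable_funM; first exact: measurable_powR.
  apply: (@measurableT_comp _ _ _ _ _ _ expR _ (fun v : R => - v)%R).
    exact: measurable_expR.
  exact: measurable_funN.
Qed.


Local Close Scope ereal_scope.
Lemma powV_neg (x : R) : (0 < x)%R -> (x^-1) `^ (- x) = x `^ x.
Proof.
move=> x0; rewrite !powRE' ?invr_gt0 // lnV ?posrE //.
by rewrite mulNr mulrN opprK.
Qed.

Lemma le_int (f1 f2 : R -> R) : measurable_fun setT f1 -> measurable_fun setT f2 ->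
  (forall t, (0 < t < 1)%R -> (0 <= f1 t)%R) ->
  (forall t, (0 < t < 1)%R -> (f1 t <= f2 t)%R) ->
  (\int[mu]_(t in `]0%R, 1%R[) (f1 t)%:E <= \int[mu]_(t in `]0%R, 1%R[) (f2 t)%:E)%E.
Proof.
move=> m1 m2 f10 f12; apply: ge0_le_integral => //.
- by apply: measurable_funTS; apply/measurable_EFinP.
- by apply: measurable_funTS; apply/measurable_EFinP.
Qed.

Lemma mpow_nln (a : R) : measurable_fun [set: R] (fun t : R => (- ln t) `^ a).
Proof.
apply: (measurableT_comp (measurable_powR _)).
by apply: measurable_funN; exact: measurable_ln.
Qed.

Lemma mpow_onem (g : R -> R) : measurable_fun [set: R] g ->
  measurable_fun [set: R] (fun t : R => g (1 - t)).
Proof.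
move=> mg; apply: (@measurableT_comp _ _ _ _ _ _ g _ (fun t : R => 1 - t)%R) => //.
by apply: measurable_funB => //; exact: measurable_cst.
Qed.

Lemma pt1 (t : R) : (0 < t < 1)%R -> (0 < t)%R /\ (t <= - ln (1 - t))%R.
Proof.
move=> /andP[t0 t1]; split => //.
have := @le_ln1Dx R (- t) ltac:(lra).
lra.
Qed.

Lemma pt2 (t : R) : (0 < t < 1)%R -> (0 < 1 - t)%R /\ (1 - t <= - ln t)%R.
Proof.
move=> /andP[t0 t1]; split; first lra.
have := @le_ln1Dx R (t - 1) ltac:(lra).
rewrite addrC subrK; lra.
Qed.
End S.

Local Close Scope ereal_scope.
Local Open Scope ring_scope.

Theorem mainTheorem8 (R : realType) :
  (forall x : R, 1 <= x ->
     ((x `^ (- x^-1))%:E * EulerGamma x^-1 <= Bigamma x x^-1)%E /\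
     (Bigamma x x^-1 <= (x `^ x)%:E * EulerGamma x)%E) /\
  (forall x : R, 0 < x -> x <= 1 ->
     ((x `^ (- x^-1))%:E * EulerGamma x^-1 >= Bigamma x x^-1)%E /\
     (Bigamma x x^-1 >= (x `^ x)%:E * EulerGamma x)%E).
Proof.
have mB : forall x y : R, measurable_fun [set: R]
    (fun t : R => (- ln t) `^ (x - 1) * (- ln (1 - t)) `^ (y - 1)).
  move=> x y; apply: measurable_funM; first exact: mpow_nln.
  exact: (@mpow_onem R _ (@mpow_nln R (y - 1))).
have mK : forall p q : R, measurable_fun [set: R]
    (fun t : R => t `^ (q - 1) * (- ln t) `^ (p - 1)).
  move=> p q; apply: measurable_funM; first exact: measurable_powR.
  exact: (@mpow_nln R _).
have mKr : forall p q : R, measurable_fun [set: R]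
    (fun t : R => (1 - t) `^ (q - 1) * (- ln (1 - t)) `^ (p - 1)).
  by move=> p q; apply: (@mpow_onem R _ (mK p q)).
have K0 : forall p q t, ((0:R)%:E <= (t `^ (q - 1) * (- ln t) `^ (p - 1))%:E)%E.
  by move=> p q t; rewrite lee_fin mulr_ge0 ?powR_ge0.
split.
- move=> x x1.
  have x0 : 0 < x by exact: lt_le_trans ltr01 x1.
  have hy : x^-1 - 1 <= 0 by rewrite subr_le0 invf_le1.
  have hx : 0 <= x - 1 by rewrite subr_ge0.
  split.
  + rewrite /EulerGamma -(@KEY R (x^-1) x x0) (@refl01 R _ (@meas_g1 R _ _) (K0 _ _)) /Bigamma.
    apply: le_int => //.
    * by move=> t _; rewrite mulr_ge0 ?powR_ge0.
    * move=> t ht; have [h1 h2] := @pt2 R t ht.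
      by apply: ler_wpM2r; [exact: powR_ge0 | exact: powR_le_pos].
  + rewrite /EulerGamma /Bigamma -powV_neg // -KEY ?invr_gt0 //.
    apply: le_int => //.
    * by move=> t _; rewrite mulr_ge0 ?powR_ge0.
    * move=> t ht; have [h1 h2] := @pt1 R t ht.
      rewrite [leRHS]mulrC; apply: ler_wpM2l; [exact: powR_ge0 | exact: powR_le_neg].
- move=> x x0 x1.
  have hy : 0 <= x^-1 - 1 by rewrite subr_ge0 invf_ge1.
  have hx : x - 1 <= 0 by rewrite subr_le0.
  split.
  + rewrite /EulerGamma -(@KEY R (x^-1) x x0) (@refl01 R _ (@meas_g1 R _ _) (K0 _ _)) /Bigamma.
    apply: le_int => //.
    * by move=> t _; rewrite mulr_ge0 ?powR_ge0.
    * move=> t ht; have [h1 h2] := @pt2 R t ht.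
      by apply: ler_wpM2r; [exact: powR_ge0 | exact: powR_le_neg].
  + rewrite /EulerGamma /Bigamma -powV_neg // -KEY ?invr_gt0 //.
    apply: le_int => //.
    * by move=> t _; rewrite mulr_ge0 ?powR_ge0.
    * move=> t ht; have [h1 h2] := @pt1 R t ht.
      rewrite [leLHS]mulrC; apply: ler_wpM2l; [exact: powR_ge0 | exact: powR_le_pos].
Qed.
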